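(* Assume hypothesis (A). For every $\gamma\in\mathbb{R}_+^d$ and every $1\le i\le d$, the function $f_i(x)=\exp(\overrightarrow{\gamma_i}\cdot x)$ satisfies $$\mathcal{L}f_i(x)=\frac{\gamma_i}{G_{ii}}\Bigl(\nu_i-\mathbf{1}_{\{x^i>0\}}\frac{\mu_i}{1+\gamma_i}\Bigr)f_i(x),\qquad x\in\mathbb{Z}_+^d.$$
   Context: Jackson network with $d$ queues: arrival rates $\lambda_i\ge0$, service rates $\mu_i>0$, routing matrix $P=(p_{ij})_{i,j=1}^d$ nonnegative with $p_{ii}=0$, $\sum_jp_{ij}\le1$, $p_{i0}=1-\sum_jp_{ij}$. With $\epsilon^i$ the unit vectors, $q(\epsilon^i)=\lambda_i$, $q(-\epsilon^i)=\mu_ip_{i0}$, $q(\epsilon^j-\epsilon^i)=\mu_ip_{ij}$, $q=0$ otherwise; the process on $\mathbb{Z}_+^d$ has generator $\mathcal{L}f(y)=\sum_{z\in\mathbb{Z}_+^d}q(z-y)(f(z)-f(y))$. Hypothesis (A): $(q(x-y))_{x,y\in\mathbb{Z}^d}$ irreducible (equivalently spectral radius of $P$ $<1$ and for every $i$ some $\lambda_jp^{(n)}_{ji}>0$); then the traffic equations $\nu_j=\lambda_j+\sum_i\nu_ip_{ij}$ have a unique solution. $G=(I-P)^{-1}$. $Q_{ij}$: probability that the chain on $\{0,\dots,d\}$ with transitions $p_{ij}$ ($0$ absorbing) started at $i$ ever visits $j$ (time $0$ included). For $\gamma\in\mathbb{R}_+^d$, $\overrightarrow{\gamma_i}=(\gamma_i^1,\dots,\gamma_i^d)$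 with $\gamma_i^j=\log(1+Q_{ji}\gamma_i)$. *)

(* Defs.v *)
From HB Require Import structures.
From mathcomp Require Import all_boot all_order all_algebra.
From mathcomp Require Import all_classical all_reals all_analysis.
From Stdlib Require Import Relations.
Import numFieldNormedType.Exports.
Set Implicit Arguments. Unset Strict Implicit. Unset Printing Implicit Defensive.
Import Order.TTheory GRing.Theory Num.Theory.
Local Open Scope ring_scope.
Local Open Scope classical_set_scope.

(* Points of Z^d and of Z_+^d (queues indexed by 'I_d = {0,..,d-1}). *)
Definition Zvec (d : nat) := {ffun 'I_d -> int}.
Definition Nvec (d : nat) := {ffun 'I_d -> nat}.

Definition unitv (d : nat) (i : 'I_d) : Zvec d := [ffun k => if k == i then 1 else 0].

Definition toZ (d : nat) (x : Nvec d) : Zvec d := [ffun k => (x k)%:Z].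

Definition p0 (R : realType) (d : nat) (P : 'M[R]_d) (i : 'I_d) : R :=
  1 - \sum_(j < d) P i j.

(* the jump rates q : Z^d -> R:
   q(eps^i) = lam_i, q(-eps^i) = mu_i p_i0, q(eps^j - eps^i) = mu_i p_ij (i <> j),
   q = 0 otherwise *)
Definition qrate (R : realType) (d : nat) (lam mu : 'I_d -> R) (P : 'M[R]_d)
    (v : Zvec d) : R :=
  if [pick i | v == unitv i] is Some i then lam i
  else if [pick i | v == - unitv i] is Some i then mu i * p0 P i
  else if [pick ij : 'I_d * 'I_d | (ij.1 != ij.2) && (v == unitv ij.2 - unitv ij.1)]
       is Some ij then mu ij.1 * P ij.1 ij.2
  else 0.

Definition irreducibleZ (R : realType) (d : nat) (q : Zvec d -> R) : Prop :=
  forall x y : Zvec d, clos_refl_trans (Zvec d) (fun a b => 0 < q (a - b)) x y.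

Definition gen (R : realType) (d : nat) (q : Zvec d -> R) (f : Nvec d -> R)
    (y : Nvec d) : R :=
  \sum_(z \in [set: Nvec d]) q (toZ z - toZ y) * (f z - f y).

(* Transition matrix of the chain on {0,...,d}: state 0 (= ord0) is absorbing,
   queue i corresponds to state lift ord0 i (value i+1). *)
Definition Pext (R : realType) (d : nat) (P : 'M[R]_d) : 'M[R]_d.+1 :=
  \matrix_(a, b)
    match unlift ord0 a, unlift ord0 b with
    | None, None => 1
    | None, Some _ => 0
    | Some i, None => p0 P i
    | Some i, Some j => P i j
    end.

Definition visit_prob (R : realType) (d : nat) (P : 'M[R]_d) (n : nat)
    (a b : 'I_d.+1) : R :=
  \sum_(s : n.-tuple 'I_d.+1)
     (\prod_(m < n) Pext P (nth a (a :: s) m) (nth a (a :: s) m.+1)) *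
     (b \in a :: s)%:R.

(* Q_ij : probability that the chain started at i ever visits j (time 0 included)
   = limit of the (nondecreasing) finite-horizon probabilities. *)
Definition Qhit (R : realType) (d : nat) (P : 'M[R]_d) (i j : 'I_d) : R :=
  limn ((fun n => visit_prob P n (lift ord0 i) (lift ord0 j)) : R^nat).

Definition Gmx (R : realType) (d : nat) (P : 'M[R]_d) : 'M[R]_d :=
  invmx (1%:M - P).

Definition gvec (R : realType) (d : nat) (P : 'M[R]_d) (gamma : 'I_d -> R)
    (i : 'I_d) : 'I_d -> R :=
  fun j => ln (1 + Qhit P j i * gamma i).

Definition fexp (R : realType) (d : nat) (v : 'I_d -> R) (x : Nvec d) : R :=
  expR (\sum_(j < d) v j * (x j)%:R).

(* Main.v *)
Require Import Defs.
From HB Require Import structures.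
From mathcomp Require Import all_boot all_order all_algebra.
From mathcomp Require Import all_classical all_reals all_analysis.
From mathcomp Require Import zify finmap ring lra.
From Stdlib Require Import Relations.
Import numFieldNormedType.Exports.
Import Order.TTheory GRing.Theory Num.Theory.
Local Open Scope ring_scope.
Set Implicit Arguments. Unset Strict Implicit.

Lemma big_tuple_cons (R : realType) (T : finType) n (F : n.+1.-tuple T -> R) :
  \sum_(s : n.+1.-tuple T) F s = \sum_(c : T) \sum_(s : n.-tuple T) F [tuple of c :: s].
Proof.
rewrite pair_big /=.
rewrite (reindex (fun p : T * n.-tuple T => [tuple of p.1 :: p.2])) /=.
  by apply: eq_bigr => -[c s].
exists (fun s : n.+1.-tuple T => (thead s, [tuple of behead s])).
  by move=> [c s] _ /=; congr pair; apply: val_inj.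
move=> s _; apply: val_inj => /=; case: s => -[|x s] //=.
Qed.

Definition wt (R : realType) d (P : 'M[R]_d) n (a : 'I_d.+1) (s : seq 'I_d.+1) : R :=
  \prod_(m < n) Pext P (nth a (a :: s) m) (nth a (a :: s) m.+1).

Lemma wt_cons (R : realType) d (P : 'M[R]_d) n a c (s : seq 'I_d.+1) :
  size s = n -> wt P n.+1 a (c :: s) = Pext P a c * wt P n c s.
Proof.
move=> hs; rewrite /wt big_ord_recl /=; congr (_ * _).
apply: eq_bigr => m _ /=; rewrite add0n.
rewrite (set_nth_default c a) /=; last by rewrite ltnS hs ltnW.
by rewrite (set_nth_default c a) // hs.
Qed.

Lemma Pext_lift (R : realType) d (P : 'M[R]_d) i j :
  Pext P (lift ord0 i) (lift ord0 j) = P i j.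
Proof. by rewrite /Pext mxE !liftK. Qed.

Lemma Pext_lift0 (R : realType) d (P : 'M[R]_d) i :
  Pext P (lift ord0 i) ord0 = p0 P i.
Proof. by rewrite /Pext mxE liftK unlift_none. Qed.

Lemma Pext_0 (R : realType) d (P : 'M[R]_d) b :
  Pext P ord0 b = (b == ord0)%:R.
Proof.
rewrite /Pext mxE unlift_none; case: (unliftP ord0 b) => [j ->|->].
  by rewrite eq_sym (negbTE (neq_lift _ _)).
by rewrite eqxx.
Qed.

Lemma Pext_row (R : realType) d (P : 'M[R]_d) a :
  \sum_b Pext P a b = 1.
Proof.
case: (unliftP ord0 a) => [i ->|->].
  rewrite big_ord_recl Pext_lift0.
  under eq_bigr do rewrite Pext_lift.
  by rewrite /p0 subrK.
rewrite big_ord_recl Pext_0 eqxx big1 ?addr0 // => j _.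
by rewrite Pext_0 eq_sym (negbTE (neq_lift _ _)).
Qed.

Lemma wt_sum (R : realType) d (P : 'M[R]_d) n a :
  \sum_(s : n.-tuple 'I_d.+1) wt P n a s = 1.
Proof.
elim: n a => [|n IH] a.
  rewrite (eq_bigl (pred1 [tuple])); last by move=> s; apply/esym/eqP/tuple0.
  by rewrite big_pred1_eq /wt big_ord0.
rewrite big_tuple_cons -[RHS](Pext_row P a); apply: eq_bigr => c _.
under eq_bigr do rewrite wt_cons ?size_tuple //.
by rewrite -mulr_sumr IH mulr1.
Qed.

Lemma vp0 (R : realType) d (P : 'M[R]_d) a b :
  visit_prob P 0 a b = (b == a)%:R.
Proof.
rewrite /visit_prob (eq_bigl (pred1 [tuple])); last by move=> s; apply/esym/eqP/tuple0.
by rewrite big_pred1_eq big_ord0 mul1r /= inE.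
Qed.

Lemma vpS (R : realType) d (P : 'M[R]_d) n a b :
  visit_prob P n.+1 a b =
  if b == a then 1 else \sum_c Pext P a c * visit_prob P n c b.
Proof.
rewrite /visit_prob big_tuple_cons.
have E c (s : n.-tuple 'I_d.+1) :
  \prod_(m < n.+1) Pext P (nth a (a :: [tuple of c :: s]) m)
      (nth a (a :: [tuple of c :: s]) m.+1) = Pext P a c * wt P n c s.
  by rewrite -(wt_cons P a c (size_tuple s)).
under eq_bigr do under eq_bigr do rewrite E.
case: eqP => [->|hba].
  under eq_bigr do under eq_bigr do rewrite inE eqxx /= mulr1.
  rewrite -[RHS](Pext_row P a); apply: eq_bigr => c _.
  by rewrite -mulr_sumr wt_sum mulr1.
apply: eq_bigr => c _; rewrite mulr_sumr; apply: eq_bigr => s _.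
rewrite inE; move/eqP/negbTE: hba => -> /=; rewrite mulrA.
done.
Qed.

Lemma Pext_ge0 (R : realType) d (P : 'M[R]_d)
  (hP : forall i j, 0 <= P i j) (hrow : forall i, \sum_(j < d) P i j <= 1) a b :
  0 <= Pext P a b.
Proof.
case: (unliftP ord0 a) => [i ->|->]; last by rewrite Pext_0 ler0n.
case: (unliftP ord0 b) => [j ->|->]; first by rewrite Pext_lift.
by rewrite Pext_lift0 /p0 subr_ge0.
Qed.

Lemma vp_bnd (R : realType) d (P : 'M[R]_d)
  (hP : forall i j, 0 <= P i j) (hrow : forall i, \sum_(j < d) P i j <= 1) n a b :
  0 <= visit_prob P n a b <= 1.
Proof.
elim: n a => [|n IH] a; first by rewrite vp0; case: (b == a); rewrite /= ?ler01 ?lexx.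
rewrite vpS; case: eqP => _; first by rewrite ler01 lexx.
apply/andP; split.
  by apply: sumr_ge0 => c _; apply: mulr_ge0; [apply: Pext_ge0|case/andP: (IH c)].
rewrite -(Pext_row P a); apply: ler_sum => c _.
rewrite -[leRHS]mulr1; apply: ler_wpM2l; first exact: Pext_ge0.
by case/andP: (IH c).
Qed.

Lemma vp_mono (R : realType) d (P : 'M[R]_d)
  (hP : forall i j, 0 <= P i j) (hrow : forall i, \sum_(j < d) P i j <= 1) n a b :
  visit_prob P n a b <= visit_prob P n.+1 a b.
Proof.
elim: n a => [|n IH] a.
  rewrite vpS vp0; case: eqP => _ //.
  by apply: sumr_ge0 => c _; apply: mulr_ge0; [apply: Pext_ge0|case/andP: (vp_bnd hP hrow 0 c b)].
rewrite (vpS P n.+1) vpS; case: eqP => _ //.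
apply: ler_sum => c _; apply: ler_wpM2l; [exact: Pext_ge0| exact: IH].
Qed.

Lemma vp_cvg (R : realType) d (P : 'M[R]_d)
  (hP : forall i j, 0 <= P i j) (hrow : forall i, \sum_(j < d) P i j <= 1) a b :
  cvgn ((fun n => visit_prob P n a b) : R^nat).
Proof.
apply: nondecreasing_is_cvgn.
  by apply/nondecreasing_seqP => n; exact: vp_mono.
exists 1 => _ [n _ <-]; by case/andP: (vp_bnd hP hrow n a b).
Qed.


Definition Qx (R : realType) d (P : 'M[R]_d) (a b : 'I_d.+1) : R :=
  limn ((fun n => visit_prob P n a b) : R^nat).

Lemma Qx_step (R : realType) d (P : 'M[R]_d)
  (hP : forall i j, 0 <= P i j) (hrow : forall i, \sum_(j < d) P i j <= 1) a b :
  b != a -> Qx P a b = \sum_c Pext P a c * Qx P c b.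
Proof.
move=> hba; apply: cvg_lim => //.
rewrite -cvg_shiftS /=.
have -> : (fun n => visit_prob P n.+1 a b) = (fun n => \sum_c Pext P a c * visit_prob P n c b).
  by apply: funext => n; rewrite vpS (negbTE hba).
apply: (@cvg_big _ _ +%R 0 xpredT add_continuous) => // c _.
apply: cvgMl_tmp; exact: vp_cvg.
Qed.

Lemma Qx_refl (R : realType) d (P : 'M[R]_d) a : Qx P a a = 1.
Proof.
rewrite /Qx; have -> : (fun n => visit_prob P n a a) = (fun=> 1).
  by apply: funext => -[|n]; rewrite ?vp0 ?vpS eqxx.
exact: lim_cst.
Qed.

Lemma Qx_0 (R : realType) d (P : 'M[R]_d) j : Qx P ord0 (lift ord0 j) = 0.
Proof.
rewrite /Qx; have -> : (fun n => visit_prob P n ord0 (lift ord0 j)) = (fun=> 0).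
  apply: funext => n; elim: n => [|n IH]; first by rewrite vp0 eq_sym (negbTE (neq_lift _ _)).
  rewrite vpS eq_sym (negbTE (neq_lift _ _)) big_ord_recl Pext_0 eqxx mul1r IH add0r.
  by rewrite big1 // => c _; rewrite Pext_0 eq_sym (negbTE (neq_lift _ _)) mul0r.
exact: lim_cst.
Qed.

Lemma Qx_ge0 (R : realType) d (P : 'M[R]_d)
  (hP : forall i j, 0 <= P i j) (hrow : forall i, \sum_(j < d) P i j <= 1) a b :
  0 <= Qx P a b.
Proof.
apply: limr_ge; first exact: vp_cvg.
by apply: nearW => n; case/andP: (vp_bnd hP hrow n a b).
Qed.

Lemma unitvE d (i k : 'I_d) : unitv i k = (k == i)%:Z.
Proof. by rewrite /unitv ffunE; case: (k == i). Qed.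

Lemma zvD d (a b : Zvec d) k : (a + b) k = a k + b k.
Proof. by rewrite ffunE. Qed.
Lemma zvN d (a : Zvec d) k : (- a) k = - a k.
Proof. by rewrite ffunE. Qed.
Lemma zvB d (a b : Zvec d) k : (a - b) k = a k - b k.
Proof. by rewrite zvD zvN. Qed.
Lemma zv0 d k : (0 : Zvec d) k = 0.
Proof. by rewrite ffunE. Qed.

Definition phi d (S : pred 'I_d) (v : Zvec d) : int := \sum_(k | S k) v k.

Lemma phiB d S (a b : Zvec d) : phi S (a - b) = phi S a - phi S b.
Proof. by rewrite /phi -sumrB; apply: eq_bigr => k _; rewrite zvB. Qed.

Lemma phi_unit d S (i : 'I_d) : phi S (unitv i) = (S i)%:Z.
Proof.
rewrite /phi; under eq_bigr do rewrite unitvE.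
case: (boolP (S i)) => Si.
  rewrite (bigD1 i) //= eqxx big1 ?addr0 // => k /andP [_ hk].
  by rewrite (negbTE hk).
rewrite big1 // => k Sk; case: eqP => // hk.
by move: Si; rewrite -hk Sk.
Qed.

Lemma phi_q_ge0 (R : realType) d (lam mu : 'I_d -> R) (P : 'M[R]_d) (S : pred 'I_d)
  (h0 : forall j, S j -> p0 P j = 0) (hcl : forall j k, S j -> P j k != 0 -> S k)
  (v : Zvec d) : 0 < qrate lam mu P v -> 0 <= phi S v.
Proof.
rewrite /qrate.
case: pickP => [i /eqP -> _|_]; first by rewrite phi_unit.
case: pickP => [i /eqP -> hq|_].
  rewrite -sub0r phiB phi_unit.
  have -> : (phi S 0) = 0 by rewrite /phi big1 // => k _; rewrite zv0.
  case: (boolP (S i)) => Si; last by rewrite subr0.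
  by move: hq; rewrite h0 // mulr0 ltxx.
case: pickP => [[j k] /andP [/= hne /eqP ->] hq|_]; last by rewrite ltxx.
rewrite phiB !phi_unit.
case: (boolP (S j)) => Sj; last by rewrite subr0.
have : P j k != 0 by apply: contraTneq hq => ->; rewrite mulr0 ltxx.
by move/(hcl _ _ Sj) => ->; rewrite subrr.
Qed.

Lemma no_closed (R : realType) d (lam mu : 'I_d -> R) (P : 'M[R]_d)
  (hA : irreducibleZ (qrate lam mu P)) (S : pred 'I_d)
  (h0 : forall j, S j -> p0 P j = 0) (hcl : forall j k, S j -> P j k != 0 -> S k)
  j : ~~ S j.
Proof.
apply/negP => Sj.
have key : forall x y, clos_refl_trans (Zvec d) (fun a b => 0 < qrate lam mu P (a - b)) x y ->
    phi S y <= phi S x.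
  move=> x y; elim => //.
  - move=> a b hab; rewrite -subr_ge0 -phiB; exact: (phi_q_ge0 h0 hcl hab).
  - by move=> a b c _ h1 _ h2; apply: le_trans h2 h1.
have := key _ _ (hA 0 (unitv j)).
rewrite phi_unit Sj.
have -> : (phi S 0) = 0 by rewrite /phi big1 // => k _; rewrite zv0.
by [].
Qed.

Lemma fix_zero (R : realType) d (lam mu : 'I_d -> R) (P : 'M[R]_d)
  (hP : forall i j, 0 <= P i j) (hrow : forall i, \sum_(j < d) P i j <= 1)
  (hA : irreducibleZ (qrate lam mu P)) (v : 'rV[R]_d) :
  (forall j, v 0 j = \sum_k P j k * v 0 k) -> v = 0.
Proof.
move=> hv; apply/matrixP => r j; rewrite mxE (ord1 r).
pose F := fun k => `|v 0 k|.
case: (@arg_maxP _ _ _ j xpredT F isT) => jm _ hmax.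
set M := F jm in hmax.
have hM : forall k, F k <= M by move=> k; exact: hmax.
have M0 : 0 <= M by rewrite /M /F normr_ge0.
case: (eqVneq M 0) => [M0'|Mn0].
  by apply/eqP; rewrite -normr_eq0 eq_le normr_ge0 andbT -M0' hM.
have Mpos : 0 < M by rewrite lt_def Mn0 M0.
pose S := fun k => F k == M.
have key : forall k, S k -> (\sum_l P k l = 1) /\ (forall l, P k l != 0 -> S l).
  move=> k /eqP Sk.
  have lo : M <= \sum_l P k l * F l.
    rewrite -Sk /F hv; apply: le_trans (ler_norm_sum _ _ _) _.
    by apply: ler_sum => l _; rewrite normrM ger0_norm.
  have up : \sum_l P k l * F l <= (\sum_l P k l) * M.
    rewrite mulr_suml; apply: ler_sum => l _; apply: ler_wpM2l => //.
  have up2 : (\sum_l P k l) * M <= M by apply: ler_piMl.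
  have s1 : \sum_l P k l = 1.
    apply/eqP; rewrite eq_le hrow /=.
    by rewrite -(ler_pM2r Mpos) mul1r (le_trans lo up).
  split => // l hPl.
  have z : \sum_l P k l * (M - F l) = 0.
    under eq_bigr do rewrite mulrBr.
    rewrite sumrB -mulr_suml s1 mul1r; apply/eqP; rewrite subr_eq0 eq_le lo /=.
    by move: up; rewrite s1 mul1r.
  have /(_ l isT) : forall l, xpredT l -> P k l * (M - F l) = 0.
    apply: psumr_eq0P z => l' _; apply: mulr_ge0 => //; rewrite subr_ge0; exact: hM.
  move/eqP; rewrite mulf_eq0 (negbTE hPl) /= subr_eq0 => /eqP hl.
  by rewrite /S -hl.
have Hn : ~~ S jm.
  apply: (@no_closed R d lam mu P hA S).
  - by move=> k /key [s1 _]; rewrite /p0 s1 subrr.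
  - by move=> k l /key [_ h]; exact: h.
by move: Hn; rewrite /S /M eqxx.
Qed.

Lemma IP_unit (R : realType) d (lam mu : 'I_d -> R) (P : 'M[R]_d)
  (hP : forall i j, 0 <= P i j) (hrow : forall i, \sum_(j < d) P i j <= 1)
  (hA : irreducibleZ (qrate lam mu P)) :
  (1%:M - P) \in unitmx.
Proof.
rewrite -unitmx_tr -row_free_unit -kermx_eq0.
apply/negPn/negP => /rowV0Pn [v /sub_kermxP hv hv0].
move/negP: hv0; apply; apply/eqP.
apply: (fix_zero hP hrow hA) => j.
move/matrixP: hv => /(_ 0 j).
rewrite linearB /= trmx1 mulmxBr mulmx1 !mxE => /eqP; rewrite subr_eq0 => /eqP ->.
by apply: eq_bigr => k _; rewrite mxE mulrC.
Qed.

Lemma zv_eqP d (a b : Zvec d) : (forall k, a k = b k) -> a = b.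
Proof. by move=> h; apply/ffunP. Qed.

Lemma unitv_inj d (i k : 'I_d) : (unitv k == unitv i) = (k == i).
Proof.
apply/eqP/eqP => [/ffunP/(_ k)|->//]; rewrite !unitvE eqxx.
by case: eqP.
Qed.

Lemma unitv_neqN d (i k : 'I_d) : (unitv k == - unitv i) = false.
Proof.
apply/eqP => /ffunP/(_ k); rewrite zvN !unitvE eqxx; case: (k == i) => //.
Qed.

Lemma unitv_neqD d (i j k : 'I_d) : j != k -> (unitv i == unitv k - unitv j) = false.
Proof.
move=> hjk; apply/eqP => /ffunP/(_ j); rewrite zvB !unitvE eqxx (negbTE hjk).
by case: (j == i).
Qed.

Lemma unitvN_neqD d (i j k : 'I_d) : j != k -> (- unitv i == unitv k - unitv j) = false.
Proof.
move=> hjk; apply/eqP => /ffunP/(_ k); rewrite zvB zvN !unitvE eqxx (eq_sym k j) (negbTE hjk).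
by case: (k == i).
Qed.

Lemma unitvD_inj d (j k j' k' : 'I_d) : j != k -> j' != k' ->
  (unitv k' - unitv j' == unitv k - unitv j) = ((j' == j) && (k' == k)).
Proof.
move=> hjk hjk'; apply/eqP/andP => [/ffunP h|[/eqP-> /eqP->]//].
have := h k; have := h j; rewrite !zvB !unitvE !eqxx (negbTE hjk) (eq_sym k j) (negbTE hjk).
case: (eqVneq j j') => [<-|hjj]; case: (eqVneq k k') => [<-|hkk] //; rewrite ?eqxx //=.
all: by case: (_ == _); case: (_ == _).
Qed.

Definition T3 (R : realType) d (mu : 'I_d -> R) (P : 'M[R]_d) (v : Zvec d) : R :=
  \sum_j \sum_k mu j * P j k * (v == unitv k - unitv j)%:R.

Lemma T3_zero (R : realType) d (mu : 'I_d -> R) (P : 'M[R]_d) (hPii : forall i, P i i = 0)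
  (v : Zvec d) : (forall j k, j != k -> (v == unitv k - unitv j) = false) -> T3 mu P v = 0.
Proof.
move=> h; apply: big1 => j _; apply: big1 => k _.
case: (eqVneq j k) => [->|hjk]; first by rewrite hPii mulr0 mul0r.
by rewrite h // mulr0.
Qed.

Lemma qdec3 (R : realType) d (lam mu : 'I_d -> R) (P : 'M[R]_d) (hPii : forall i, P i i = 0)
  (v : Zvec d) : qrate lam mu P v =
  \sum_k lam k * (v == unitv k)%:R +
  (\sum_j mu j * p0 P j * (v == - unitv j)%:R + T3 mu P v).
Proof.
rewrite /qrate.
case: pickP => [i /eqP -> | h1].
  rewrite (bigD1 i) //= eqxx mulr1 big1 => [|k hk]; last by rewrite unitv_inj eq_sym (negbTE hk) mulr0.
  rewrite big1 => [|j _]; last by rewrite unitv_neqN mulr0.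
  rewrite (@T3_zero _ _ _ _ hPii) ?addr0 // => j k hjk; exact: unitv_neqD.
case: pickP => [i /eqP -> | h2].
  rewrite big1 => [|k _]; last by rewrite eq_sym unitv_neqN mulr0.
  rewrite (bigD1 i) //= eqxx mulr1 big1 => [|j hj]; last by rewrite eqr_opp unitv_inj eq_sym (negbTE hj) mulr0.
  rewrite (@T3_zero _ _ _ _ hPii) ?addr0 ?add0r // => j k hjk; exact: unitvN_neqD.
case: pickP => [[j k] /andP [/= hjk /eqP ->] | h3].
  rewrite big1 => [|k' _]; last by rewrite eq_sym unitv_neqD // mulr0.
  rewrite big1 => [|j' _]; last by rewrite eq_sym unitvN_neqD // mulr0.
  rewrite /T3 pair_big (bigD1 (j, k)) //= eqxx mulr1 big1 ?addr0 ?add0r // => -[j' k'] /= hne.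
  case: (eqVneq j' k') => [->|hjk']; first by rewrite hPii mulr0 mul0r.
  rewrite unitvD_inj //.
  by move: hne; rewrite xpair_eqE (eq_sym j') (eq_sym k') => /negbTE ->; rewrite mulr0.
rewrite big1 => [|k _]; last by rewrite h1 mulr0.
rewrite big1 => [|j _]; last by rewrite h2 mulr0.
rewrite (@T3_zero _ _ _ _ hPii) ?addr0 // => j k hjk.
by have := h3 (j, k); rewrite /= hjk.
Qed.

Definition cu d (y : Nvec d) k : Nvec d := [ffun l => (y l + (l == k))%N].
Definition cd d (y : Nvec d) j : Nvec d := [ffun l => (y l - (l == j))%N].
Definition cr d (y : Nvec d) j k : Nvec d := [ffun l => (y l - (l == j) + (l == k))%N].

Lemma toZE d (z : Nvec d) l : toZ z l = (z l)%:Z.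
Proof. by rewrite ffunE. Qed.

Lemma Z1 d (y z : Nvec d) k : (toZ z - toZ y == unitv k) = (z == cu y k).
Proof.
apply/eqP/eqP => [/ffunP h|->]; apply/ffunP => l.
  by have := h l; rewrite !ffunE; case: (l == k) => /=; lia.
by rewrite !ffunE; case: (l == k) => /=; lia.
Qed.

Lemma Z2 d (y z : Nvec d) j : (toZ z - toZ y == - unitv j) = (z == cd y j) && (0 < y j)%N.
Proof.
apply/eqP/andP => [/ffunP h|[/eqP -> hy]].
  split; last by have := h j; rewrite !ffunE eqxx /=; lia.
  apply/eqP/ffunP => l.
  by have := h l; rewrite !ffunE; case: (l == j) => /=; lia.
apply/ffunP => l; rewrite !ffunE.
by case: (eqVneq l j) => [->|] /=; lia.
Qed.

Lemma Z3 d (y z : Nvec d) j k : j != k ->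
  (toZ z - toZ y == unitv k - unitv j) = (z == cr y j k) && (0 < y j)%N.
Proof.
move=> hjk.
apply/eqP/andP => [/ffunP h|[/eqP -> hy]].
  split; last first.
    by have := h j; rewrite !ffunE eqxx (negbTE hjk) /=; lia.
  apply/eqP/ffunP => l.
  have := h l; rewrite !ffunE; case: (eqVneq l j) => [->|] /=.
    by rewrite (negbTE hjk) /=; lia.
  by case: (l == k) => /=; lia.
apply/ffunP => l; rewrite !ffunE.
case: (eqVneq l j) => [->|] /=; last by case: (l == k) => /=; lia.
by rewrite (negbTE hjk) /=; lia.
Qed.

Lemma qz (R : realType) d (lam mu : 'I_d -> R) (P : 'M[R]_d) (hPii : forall i, P i i = 0)
  (y z : Nvec d) : qrate lam mu P (toZ z - toZ y) =
  \sum_k lam k * (z == cu y k)%:R +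
  (\sum_j (mu j * p0 P j * (0 < y j)%N%:R) * (z == cd y j)%:R +
   \sum_(p : 'I_d * 'I_d) (mu p.1 * P p.1 p.2 * (0 < y p.1)%N%:R) * (z == cr y p.1 p.2)%:R).
Proof.
rewrite qdec3 //; congr (_ + (_ + _)).
- by apply: eq_bigr => k _; rewrite Z1.
- apply: eq_bigr => j _; rewrite Z2.
  by case: (0 < y j)%N; rewrite /= ?andbT ?andbF ?mulr1 ?mulr0 ?mul0r.
rewrite /T3 pair_big; apply: eq_bigr => -[j k] _ /=.
case: (eqVneq j k) => [->|hjk]; first by rewrite hPii !mulr0 !mul0r.
rewrite Z3 //.
by case: (0 < y j)%N; rewrite /= ?andbT ?andbF ?mulr1 ?mulr0 ?mul0r.
Qed.

Lemma sum_pt (R : realType) (T : eqType) (r : seq T) (c : T) (H : T -> R) :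
  uniq r -> c \in r -> \sum_(z <- r) (z == c)%:R * H z = H c.
Proof.
move=> ur cr; rewrite (bigD1_seq c) //= eqxx mul1r big1 ?addr0 // => z /negbTE ->.
by rewrite mul0r.
Qed.

Lemma sum_pt_lin (R : realType) (T : eqType) (I : finType) (r : seq T) (a : I -> R)
  (c : I -> T) (H : T -> R) : uniq r -> (forall m, c m \in r) ->
  \sum_(z <- r) (\sum_m a m * (z == c m)%:R) * H z = \sum_m a m * H (c m).
Proof.
move=> ur hc; under eq_bigr do rewrite mulr_suml.
rewrite exchange_big; apply: eq_bigr => m _.
under eq_bigr do rewrite -mulrA.
by rewrite -mulr_sumr sum_pt.
Qed.

Definition candA d (y : Nvec d) : seq (Nvec d) :=
  [seq cu y k | k <- enum 'I_d] ++ ([seq cd y j | j <- enum 'I_d] ++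
     [seq cr y p.1 p.2 | p <- index_enum ('I_d * 'I_d)%type]).

Lemma gen_eqQ (R : realType) d (lam mu : 'I_d -> R) (P : 'M[R]_d) (hPii : forall i, P i i = 0)
  (f : Nvec d -> R) (y : Nvec d) :
  gen (qrate lam mu P) f y =
  \sum_k lam k * (f (cu y k) - f y) +
  (\sum_j (mu j * p0 P j * (0 < y j)%N%:R) * (f (cd y j) - f y) +
   \sum_(p : 'I_d * 'I_d) (mu p.1 * P p.1 p.2 * (0 < y p.1)%N%:R) * (f (cr y p.1 p.2) - f y)).
Proof.
pose A := seq_fset tt (candA y).
have memA : forall z, (z \in A) = (z \in candA y) by move=> z; rewrite seq_fsetE.
have h1 k : cu y k \in A by rewrite memA mem_cat map_f ?mem_enum.
have h2 j : cd y j \in A by rewrite memA !mem_cat map_f ?mem_enum ?orbT.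
have h3 p : cr y p.1 p.2 \in A.
  by rewrite memA !mem_cat (map_f (fun p => cr y p.1 p.2)) ?mem_index_enum ?orbT.
rewrite /gen (fsbigTE A).
  under eq_bigr do rewrite qz // !mulrDl.
  rewrite !big_split /=.
  by rewrite (@sum_pt_lin R _ _ _ _ _ _ (fset_uniq A) h1) (@sum_pt_lin R _ _ _ _ _ _ (fset_uniq A) h2) (@sum_pt_lin R _ _ _ _ _ _ (fset_uniq A) h3).
move=> z zA; rewrite qz // big1 ?add0r; last first.
  by move=> k _; case: eqP => [hz|]; [move: zA; rewrite hz h1 | rewrite mulr0].
rewrite big1 ?add0r; last first.
  by move=> k _; case: eqP => [hz|]; [move: zA; rewrite hz h2 | rewrite mulr0].
rewrite big1 ?mul0r //.
by move=> k _; case: eqP => [hz|]; [move: zA; rewrite hz h3 | rewrite mulr0].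
Qed.

Lemma fexp_shift (R : realType) d (g : 'I_d -> R) (y z : Nvec d) (del : 'I_d -> R) :
  (forall l, (z l)%:R = (y l)%:R + del l :> R) ->
  fexp g z = fexp g y * expR (\sum_l g l * del l).
Proof.
move=> h; rewrite /fexp -expRD -big_split /=; congr expR.
by apply: eq_bigr => l _; rewrite h mulrDr.
Qed.

Lemma dot_unit (R : realType) d (g : 'I_d -> R) k :
  \sum_l g l * (l == k)%:R = g k.
Proof.
rewrite (bigD1 k) //= eqxx mulr1 big1 ?addr0 // => l /negbTE ->.
by rewrite mulr0.
Qed.

Lemma fexp_cu (R : realType) d (g : 'I_d -> R) y k :
  fexp g (cu y k) = fexp g y * expR (g k).
Proof.
rewrite (@fexp_shift R d g y (cu y k) (fun l => (l == k)%:R)) ?dot_unit //.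
by move=> l; rewrite ffunE natrD.
Qed.

Lemma fexp_cd (R : realType) d (g : 'I_d -> R) (y : Nvec d) j : (0 < y j)%N ->
  fexp g (cd y j) = fexp g y / expR (g j).
Proof.
move=> hy.
rewrite (@fexp_shift R d g y (cd y j) (fun l => - (l == j)%:R)).
  by under eq_bigr do rewrite mulrN; rewrite sumrN dot_unit expRN.
move=> l; rewrite ffunE; case: (eqVneq l j) => [->|hlj] /=.
  by rewrite natrB //; ring.
by rewrite subr0 subn0.

Qed.

Lemma fexp_cr (R : realType) d (g : 'I_d -> R) (y : Nvec d) j k : (0 < y j)%N ->
  fexp g (cr y j k) = fexp g y * expR (g k) / expR (g j).
Proof.
move=> hy.
rewrite (@fexp_shift R d g y (cr y j k) (fun l => (l == k)%:R - (l == j)%:R)).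
  under eq_bigr do rewrite mulrBr.
  by rewrite sumrB !dot_unit expRB mulrA.
move=> l; rewrite ffunE natrD; case: (eqVneq l j) => [->|hlj] /=.
  by rewrite natrB //; ring.
rewrite subr0 subn0; ring.
Qed.

Lemma Kstep (R : realType) d (P : 'M[R]_d)
  (hP : forall i j, 0 <= P i j) (hrow : forall i, \sum_(j < d) P i j <= 1) i j :
  j != i -> Qx P (lift ord0 j) (lift ord0 i) =
            \sum_k P j k * Qx P (lift ord0 k) (lift ord0 i).
Proof.
move=> hji; rewrite (Qx_step hP hrow); last by rewrite (inj_eq lift_inj) eq_sym.
rewrite big_ord_recl Pext_lift0 Qx_0 mulr0 add0r.
by under eq_bigr do rewrite Pext_lift.
Qed.

Lemma I1 (R : realType) d (lam : 'I_d -> R) (P : 'M[R]_d)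
  (hP : forall i j, 0 <= P i j) (hrow : forall i, \sum_(j < d) P i j <= 1)
  (nu : 'I_d -> R) (hnu : forall j, nu j = lam j + \sum_(i < d) nu i * P i j) i :
  let w := fun k => Qx P (lift ord0 k) (lift ord0 i) in
  \sum_k lam k * w k = (1 - \sum_k P i k * w k) * nu i.
Proof.
move=> w.
have hl k : lam k = nu k - \sum_j nu j * P j k by rewrite {1}hnu addrK.
under eq_bigr do rewrite hl mulrBl mulr_suml.
rewrite sumrB exchange_big /= -sumrB.
rewrite (bigD1 i) //= [X in _ + X = _]big1 ?addr0; last first.
  move=> j hji.
  under eq_bigr do rewrite -mulrA.
  by rewrite -mulr_sumr /w -Kstep // subrr.
under eq_bigr do rewrite -mulrA.
rewrite -mulr_sumr /w Qx_refl; ring.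
Qed.

Lemma I2 (R : realType) d (lam mu : 'I_d -> R) (P : 'M[R]_d)
  (hP : forall i j, 0 <= P i j) (hrow : forall i, \sum_(j < d) P i j <= 1)
  (hA : irreducibleZ (qrate lam mu P)) i :
  let w := fun k => Qx P (lift ord0 k) (lift ord0 i) in
  (1 - \sum_k P i k * w k) * Gmx P i i = 1.
Proof.
move=> w.
have HG := mulVmx (IP_unit hP hrow hA).
have E : \sum_k (Gmx P *m (1%:M - P)) i k * w k = w i.
  rewrite /Gmx HG; under eq_bigr do rewrite mxE.
  rewrite (bigD1 i) //= eqxx mul1r big1 ?addr0 // => k /negbTE.
  by rewrite eq_sym => ->; rewrite mul0r.
move: E; rewrite {2}/w Qx_refl.
under eq_bigr do rewrite mxE mulr_suml.
rewrite exchange_big /=.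
have inner j : \sum_k Gmx P i j * (1%:M - P) j k * w k =
               Gmx P i j * (w j - \sum_k P j k * w k).
  under eq_bigr do rewrite -mulrA.
  rewrite -mulr_sumr; congr (_ * _).
  under eq_bigr do rewrite !mxE mulrBl.
  rewrite sumrB; congr (_ - _).
  rewrite (bigD1 j) //= eqxx mul1r big1 ?addr0 // => k /negbTE.
  by rewrite eq_sym => ->; rewrite mul0r.
under eq_bigr do rewrite inner.
rewrite (bigD1 i) //= [X in _ + X = _ -> _]big1 ?addr0; last first.
  by move=> j hji; rewrite /w -Kstep // subrr mulr0.
by rewrite {1}/w Qx_refl mulrC.
Qed.

Unset Implicit Arguments.

Theorem lemma5p1 (R : realType) (d : nat) (lam mu : 'I_d -> R) (P : 'M[R]_d)
  (hlam : forall i, 0 <= lam i) (hmu : forall i, 0 < mu i)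
  (hP : forall i j, 0 <= P i j) (hPii : forall i, P i i = 0)
  (hrow : forall i, \sum_(j < d) P i j <= 1)
  (hA : irreducibleZ (qrate lam mu P))
  (nu : 'I_d -> R) (hnu : forall j, nu j = lam j + \sum_(i < d) nu i * P i j)
  (gamma : 'I_d -> R) (hgamma : forall k, 0 <= gamma k)
  (i : 'I_d) (x : Nvec d) :
  gen (qrate lam mu P) (fexp (gvec P gamma i)) x =
  gamma i / Gmx P i i *
    (nu i - (if (0 < x i)%N then mu i / (1 + gamma i) else 0)) *
    fexp (gvec P gamma i) x.
Proof.
set g := gvec P gamma i.
set F := fexp g x.
set c := gamma i.
pose w := fun k => Qx P (lift ord0 k) (lift ord0 i).
have wge0 k : 0 <= w k by apply: Qx_ge0.
have Apos k : 0 < 1 + w k * c.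
  by apply: (lt_le_trans ltr01); rewrite lerDl; apply: mulr_ge0; [exact: wge0 | exact: hgamma].
have hexp k : expR (g k) = 1 + w k * c.
  by rewrite /g /gvec lnK // posrE; exact: Apos.
have wi : w i = 1 by rewrite /w Qx_refl.

rewrite gen_eqQ //.
under eq_bigr do rewrite fexp_cu hexp.
rewrite -(pair_big xpredT xpredT (fun j k => (mu j * P j k * (0 < x j)%N%:R) *
      (fexp g (cr x j k) - F))) /=.
rewrite -big_split /=.
pose K j := \sum_k P j k * w k.
have perj j : (mu j * p0 P j * (0 < x j)%N%:R) * (fexp g (cd x j) - F) +
    \sum_k (mu j * P j k * (0 < x j)%N%:R) * (fexp g (cr x j k) - F) =
    (0 < x j)%N%:R * mu j * c * (K j - w j) / (1 + w j * c) * F.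
  case: (boolP (0 < x j)%N) => hx /=; last first.
    by rewrite !mulr0 !mul0r add0r big1 // => k _; rewrite mulr0 mul0r.
  rewrite fexp_cd // hexp.
  under eq_bigr do rewrite fexp_cr // !hexp.
  have ha := Apos j; set a := 1 + w j * c in ha *.
  have an0 : a != 0 by rewrite gt_eqF.
  have -> : \sum_k (mu j * P j k * 1%:R) * (F * (1 + w k * c) / a - F) =
      (mu j * F * (a^-1 - 1)) * \sum_k P j k + (mu j * F * c / a) * K j.
    rewrite /K !mulr_sumr -big_split /=; apply: eq_bigr => k _.
    field; exact: an0.
  have -> : \sum_k P j k = 1 - p0 P j by rewrite /p0 opprB addrC subrK.
  rewrite -/F /a; field; exact: an0.
rewrite -/F.

under [X in _ + X = _]eq_bigr do rewrite perj.
rewrite [X in _ + X](bigD1 i) //= [X in _ + (_ + X)]big1 ?addr0; last first.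
  by move=> j hji; rewrite /K /w -Kstep // subrr !mulr0 !mul0r.
have S1 : \sum_k lam k * (F * (1 + w k * c) - F) = F * c * \sum_k lam k * w k.
  by rewrite mulr_sumr; apply: eq_bigr => k _; ring.
rewrite S1.

have h1 := I1 hP hrow hnu i.
have h2 := I2 hP hrow hA i.
rewrite /= -/w -/(K i) in h1 h2.
rewrite h1 wi.
have hr0 : 1 - K i != 0 by apply/eqP => h; move: h2; rewrite h mul0r => /esym/eqP; rewrite oner_eq0.
have hG : Gmx P i i = (1 - K i)^-1.
  by apply: (mulfI hr0); rewrite h2 divff.
rewrite hG.
have c1 : 1 + c != 0 by have := Apos i; rewrite wi mul1r => h; rewrite gt_eqF.
case: (0 < x i)%N => /=; field; rewrite ?c1 ?hr0 //.
Qed.
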